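(* If $\Lambda$ is a Legendrian knot with $\operatorname{tb}(\Lambda)<0$, then $$m(\Lambda)\ge\left\lceil\sqrt{-\operatorname{tb}(\Lambda)-\tfrac34}+\tfrac32\right\rceil.$$
   Context: Legendrian knots are taken in the standard contact structure on $\mathbb{R}^3$ and represented by front ($xz$-) projections, which have cusps in place of vertical tangencies and in which the strand of more negative slope is the overstrand at every crossing. For an oriented front with $P$ positive crossings, $N$ negative crossings and $C$ cusps, the Thurston–Bennequin number is $\operatorname{tb}=P-N-\frac12C$, a Legendrian isotopy invariant. Legendrian mosaic tiles: a square tile whose four edge midpoints are potential connection points; the tiles are $T_0$ (empty); $T_1,\dots,T_4$ (a single arc joining midpoints of two adjacent edges, one per pair of adjacent edges); $T_5,T_6$ (a segment joining midpoints of opposite edges); $T_7,T_8$ (two disjoint arcs each joining adjacent edges, using all four midpoints); $T_{10}$ (two crossing segments joining opposite edges). A Legendrian $n$-mosaic is an $n\times n$ array of these tiles with the array rotated $45^\circ$ counterclockwise so the strands form a front diagram (after rotation $T_2$, $T_4$ contain one cusp and $T_8$ two cusps; $T_1,T_3,T_7$ contain none; in $T_{10}$ the negative-slope strand is over). It is suitably connected if connection points agree across shared edges and none lies on the outer boundary. The mosaic number $m(\Lambda)$ of a Legendrian knot $\Lambda$ is the smallest $n$ such that some suitably connected Legendrian $n$-mosaic depicts a front of a Legendrian knot Legendrian isotopic to $\Lambda$. *)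

(* Defs.v *)
From HB Require Import structures.
From mathcomp Require Import all_boot all_order all_algebra.
From mathcomp Require Import reals.

Set Implicit Arguments.
Unset Strict Implicit.
Unset Printing Implicit Defensive.
Import Order.TTheory GRing.Theory Num.Theory.

(* Legendrian mosaic tiles (T9, the other crossing, is not a Legendrian tile). *)
Inductive tile := T0 | T1 | T2 | T3 | T4 | T5 | T6 | T7 | T8 | T10.

(* Sides of an (unrotated) tile: North, East, South, West.  The connection
   points are the midpoints of these sides. *)
Inductive side := sN | sE | sS | sW.

Definition side_code (s : side) : 'I_4 :=
  match s with sN => inord 0 | sE => inord 1 | sS => inord 2 | sW => inord 3 end.
Definition side_decode (i : 'I_4) : side :=
  match val i with 0 => sN | 1 => sE | 2 => sS | _ => sW end.
Lemma side_codeK : cancel side_code side_decode.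
Proof. by case; rewrite /side_decode /= inordK. Qed.
HB.instance Definition _ := Finite.copy side (can_type side_codeK).

Definition opp_side (s : side) : side :=
  match s with sN => sS | sS => sN | sE => sW | sW => sE end.

(* The arcs of each tile, as an involution on connection points:
   [partner t s = Some s'] iff tile t has an arc joining the midpoints of
   sides s and s'.  After the 45 degree counterclockwise
   rotation, the NW and SE corners become the left/right vertices, so arcs
   around them are cusps (T2, T4 one cusp, T8 two), while T1, T3, T7 have
   none; the N-S segment gets slope -1 and the W-E segment slope +1, so in
   T10 the N-S strand is the overstrand. *)
Definition partner (t : tile) (s : side) : option side :=
  match t, s with
  | T1, sN => Some sE | T1, sE => Some sN
  | T2, sN => Some sW | T2, sW => Some sN
  | T3, sS => Some sW | T3, sW => Some sS
  | T4, sS => Some sE | T4, sE => Some sS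
  | T5, sW => Some sE | T5, sE => Some sW
  | T6, sN => Some sS | T6, sS => Some sN
  | T7, sN => Some sE | T7, sE => Some sN
  | T7, sS => Some sW | T7, sW => Some sS
  | T8, sN => Some sW | T8, sW => Some sN
  | T8, sS => Some sE | T8, sE => Some sS
  | T10, sW => Some sE | T10, sE => Some sW
  | T10, sN => Some sS | T10, sS => Some sN
  | _, _ => None
  end.

Definition uses (t : tile) (s : side) : bool := partner t s != None.

Definition tile_cusps (t : tile) : nat :=
  match t with T2 => 1 | T4 => 1 | T8 => 2 | _ => 0 end.

Definition is_crossing (t : tile) : bool := if t is T10 then true else false.

(* A Legendrian n-mosaic: M i j is the tile in row i (counted from the top)
   and column j (counted from the left), before the 45 degree rotation. *)
Definition mosaic (n : nat) := 'I_n -> 'I_n -> tile.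

Definition cell n := ('I_n * 'I_n)%type.

Definition neighbor n (c : cell n) (d : side) : option (cell n) :=
  let: (i, j) := c in
  match d with
  | sN => if val i is i'.+1 then omap (fun i2 : 'I_n => (i2, j)) (insub i') else None
  | sS => omap (fun i2 : 'I_n => (i2, j)) (insub (val i).+1)
  | sW => if val j is j'.+1 then omap (fun j2 : 'I_n => (i, j2)) (insub j') else None
  | sE => omap (fun j2 : 'I_n => (i, j2)) (insub (val j).+1)
  end.

Definition tile_at n (M : mosaic n) (c : cell n) : tile := M c.1 c.2.

Definition suitably_connected n (M : mosaic n) : Prop :=
  (forall (c c' : cell n) (d : side), neighbor c d = Some c' ->
      uses (tile_at M c) d = uses (tile_at M c') (opp_side d)) /\
  (forall (c : cell n) (d : side), neighbor c d = None ->
      ~~ uses (tile_at M c) d).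

(* Oriented traversal.  A state (c, s) means: the strand enters cell c
   through the midpoint of side s.  The state is valid if tile c has a
   connection point on side s. *)
Definition state n := (cell n * side)%type.

Definition valid_state n (M : mosaic n) (x : state n) : bool :=
  uses (tile_at M x.1) x.2.

Definition next_state n (M : mosaic n) (x : state n) : state n :=
  match partner (tile_at M x.1) x.2 with
  | Some t => match neighbor x.1 t with
              | Some c' => (c', opp_side t)
              | None => x
              end
  | None => x
  end.

(* the same arc traversed in the opposite direction *)
Definition rev_state n (M : mosaic n) (x : state n) : state n :=
  match partner (tile_at M x.1) x.2 with
  | Some t => (x.1, t)
  | None => x
  end.

(* M depicts a front with exactly one component (a knot), and x0 is a
   state fixing an orientation of it: every oriented strand piece lies on
   the traversal through x0 or on the reversed traversal. *)
Definition knot_mosaic n (M : mosaic n) (x0 : state n) : Prop :=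
  valid_state M x0 /\
  forall y : state n, valid_state M y ->
    fconnect (next_state M) x0 y || fconnect (next_state M) (rev_state M x0) y.

(* Over strand: N-S segment; under strand: W-E segment.  The crossing is
   positive iff (over strand enters from S and under strand enters from E)
   or (over enters from N and under enters from W). *)
Definition crossing_sign n (M : mosaic n) (x0 : state n) (c : cell n) : int :=
  if fconnect (next_state M) x0 (c, sS) == fconnect (next_state M) x0 (c, sE)
  then 1%R else (-1)%R.

Definition writhe n (M : mosaic n) (x0 : state n) : int :=
  (\sum_(i < n) \sum_(j < n)
     (if is_crossing (M i j) then crossing_sign M x0 (i, j) else 0))%R.

Definition cusps n (M : mosaic n) : nat :=
  \sum_(i < n) \sum_(j < n) tile_cusps (M i j).

Definition tb (R : numFieldType) n (M : mosaic n) (x0 : state n) : R :=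
  ((writhe M x0)%:~R - (cusps M)%:R / 2)%R.

(* Main.v *)
Require Import Defs.
From HB Require Import structures.
From mathcomp Require Import all_boot all_order all_algebra.
From mathcomp Require Import reals zify lra.
Import Order.TTheory GRing.Theory Num.Theory.

Definition ub (t : tile) (d : side) : nat := uses t d.
Definition sc (t : tile) : nat := is_crossing t + is_crossing t + tile_cusps t.
Definition ell (t : tile) : nat :=
  match t with T1 | T3 | T5 | T6 => 1 | T7 => 2 | _ => 0 end.

Lemma tile_id t : sc t + ell t = ((ub t sN + ub t sE) + (ub t sS + ub t sW)) ./2 
  /\ ~~ odd ((ub t sN + ub t sE) + (ub t sS + ub t sW)).
Proof. by case: t. Qed.

Lemma tile_id2 t : (sc t + ell t).*2 = (ub t sN + ub t sE) + (ub t sS + ub t sW).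
Proof. by case: t. Qed.

Lemma tile_id2' t : 2 * (sc t + ell t) = (ub t sN + ub t sE) + (ub t sS + ub t sW).
Proof. by case: t. Qed.

Definition bfun (i0 iL j0 jL : bool) : nat :=
  if i0 then (if jL then 1 else 0)
  else if iL then (if j0 then 1 else if jL then 0 else 1)
  else (if j0 then 0 else if jL then 1 else 2).

Lemma local t i0 iL j0 jL : ~~ (i0 && iL) -> ~~ (j0 && jL) ->
  (i0 -> ~~ uses t sN) -> (iL -> ~~ uses t sS) ->
  (j0 -> ~~ uses t sW) -> (jL -> ~~ uses t sE) ->
  (if iL then ub t sE else ub t sW) + (if jL then ub t sS else ub t sN)
   <= ell t + bfun i0 iL j0 jL.
Proof.
have H : [==> ~~ (i0 && iL), ~~ (j0 && jL), (i0 ==> ~~ uses t sN), (iL ==> ~~ uses t sS),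
  (j0 ==> ~~ uses t sW), (jL ==> ~~ uses t sE) =>
  (if iL then ub t sE else ub t sW) + (if jL then ub t sS else ub t sN)
   <= ell t + bfun i0 iL j0 jL].
  by case: t; case: i0; case: iL; case: j0; case: jL.
move=> h1 h2 h3 h4 h5 h6; move/implyP: H => /(_ h1) /implyP /(_ h2).
move=> /implyP /(_ (introT implyP h3)) /implyP /(_ (introT implyP h4)).
by move=> /implyP /(_ (introT implyP h5)) /implyP /(_ (introT implyP h6)).
Qed.

Lemma insub_ord m k : k < m.+1 -> insub k = Some (inord k : 'I_m.+1).
Proof. by move=> h; rewrite insubT; congr Some; apply: val_inj; rewrite /= inordK. Qed.

Lemma insub_ordN m k : ~~ (k < m.+1) -> insub k = None :> option 'I_m.+1.
Proof. by move=> h; rewrite insubN. Qed.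

Section S.
Variable m : nat.
Local Notation n := m.+1.
Variable M : mosaic n.
Definition tl (i j : nat) : tile := M (inord i) (inord j).

Lemma nbE i j : i < n -> j.+1 < n ->
  neighbor ((inord i, inord j) : cell n) sE = Some (inord i, inord j.+1).
Proof. by move=> hi hj /=; rewrite inordK ?(ltnW hj) // insub_ord. Qed.
Lemma nbS i j : i.+1 < n -> j < n ->
  neighbor ((inord i, inord j) : cell n) sS = Some (inord i.+1, inord j).
Proof. by move=> hi hj /=; rewrite inordK ?(ltnW hi) // insub_ord. Qed.
Lemma nbEN i : neighbor ((inord i, inord m) : cell n) sE = None.
Proof. by rewrite /= inordK // insub_ordN // ltnn. Qed.
Lemma nbSN j : neighbor ((inord m, inord j) : cell n) sS = None.
Proof. by rewrite /= inordK // insub_ordN // ltnn. Qed.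
Lemma nbWN i : neighbor ((inord i, inord 0) : cell n) sW = None.
Proof. by rewrite /= inordK. Qed.
Lemma nbNN j : neighbor ((inord 0, inord j) : cell n) sN = None.
Proof. by rewrite /= inordK. Qed.

Hypothesis SC : suitably_connected M.

Lemma ubE (t : tile) d : ~~ uses t d -> ub t d = 0.
Proof. by rewrite /ub => /negbTE ->. Qed.
Arguments ubE {t d}.

Lemma adjE i j : i < n -> j.+1 < n -> ub (tl i j) sE = ub (tl i j.+1) sW.
Proof. by move=> hi hj; rewrite /ub /tl (SC.1 _ _ _ (@nbE i j hi hj)). Qed.
Lemma adjS i j : i.+1 < n -> j < n -> ub (tl i j) sS = ub (tl i.+1 j) sN.
Proof. by move=> hi hj; rewrite /ub /tl (SC.1 _ _ _ (@nbS i j hi hj)). Qed.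
Lemma bndE i : ~~ uses (tl i m) sE. Proof. exact: (SC.2 _ _ (nbEN i)). Qed.
Lemma bndS j : ~~ uses (tl m j) sS. Proof. exact: (SC.2 _ _ (nbSN j)). Qed.
Lemma bndW i : ~~ uses (tl i 0) sW. Proof. exact: (SC.2 _ _ (nbWN i)). Qed.
Lemma bndN j : ~~ uses (tl 0 j) sN. Proof. exact: (SC.2 _ _ (nbNN j)). Qed.

Lemma rowshift i : i < n ->
  \sum_(0 <= j < n) ub (tl i j) sE = \sum_(0 <= j < n) ub (tl i j) sW.
Proof.
move=> hi; rewrite big_nat_recr //= big_nat_recl //= (ubE (bndE i)) (ubE (bndW i)) addn0 add0n.
by apply: eq_big_nat => j /andP[_ hj]; apply: adjE.
Qed.
Lemma colshift j : j < n ->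
  \sum_(0 <= i < n) ub (tl i j) sS = \sum_(0 <= i < n) ub (tl i j) sN.
Proof.
move=> hj; rewrite big_nat_recr //= big_nat_recl //= (ubE (bndS j)) (ubE (bndN j)) addn0 add0n.
by apply: eq_big_nat => i /andP[_ hi]; apply: adjS.
Qed.
Lemma sum_const_mid k (F : nat -> nat) c : (forall j, j < k -> F j.+1 = c) ->
  \sum_(0 <= j < k.+2) F j = F 0 + k * c + F k.+1.
Proof.
move=> h; rewrite big_nat_recl // big_nat_recr //=.
rewrite (@eq_big_nat _ _ _ 0 k _ (fun _ => c)); last by move=> j /andP[_ hj]; rewrite h.
by rewrite sum_nat_const_nat subn0 addnA.
Qed.

Lemma rowsum k a c : \sum_(0 <= j < k.+2) bfun a c (j == 0) (j == k.+1)
  = bfun a c true false + k * bfun a c false false + bfun a c false true.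
Proof. by rewrite (@sum_const_mid k _ (bfun a c false false)) ?eqxx // => j hj; rewrite eqSS (ltn_eqF hj). Qed.

Lemma bsum k : \sum_(0 <= i < k.+2) \sum_(0 <= j < k.+2) bfun (i == 0) (i == k.+1) (j == 0) (j == k.+1)
  + 2 * k.+1 = 2 * (k.+1) ^ 2 + 2.
Proof.
rewrite (@sum_const_mid k _ (\sum_(0 <= j < k.+2) bfun false false (j == 0) (j == k.+1))); last first.
  by move=> j hj; rewrite eqSS (ltn_eqF hj).
rewrite !rowsum /bfun /= eqxx /=.
nia.
Qed.

Lemma dsplit k (F G : nat -> nat -> nat) :
  \sum_(0 <= i < k) \sum_(0 <= j < k) (F i j + G i j) =
  \sum_(0 <= i < k) \sum_(0 <= j < k) F i j + \sum_(0 <= i < k) \sum_(0 <= j < k) G i j.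
Proof. by rewrite -big_split /=; apply: eq_bigr => i _; rewrite big_split. Qed.

Lemma main_bound : 0 < m ->
  \sum_(0 <= i < n) \sum_(0 <= j < n) sc (tl i j) <=
  \sum_(0 <= i < n) \sum_(0 <= j < n) bfun (i == 0) (i == m) (j == 0) (j == m).
Proof.
move=> m0.
pose uN i j := ub (tl i j) sN. pose uE i j := ub (tl i j) sE.
pose uS i j := ub (tl i j) sS. pose uW i j := ub (tl i j) sW.
pose hc i j := if i == m then uE i j else uW i j.
pose vc i j := if j == m then uS i j else uN i j.
have loc : forall i j, i < n -> j < n ->
    hc i j + vc i j <= ell (tl i j) + bfun (i == 0) (i == m) (j == 0) (j == m).
  move=> i j hi hj; apply: local.
  - by apply/negP => /andP[/eqP -> /eqP h]; move: m0; rewrite -h.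
  - by apply/negP => /andP[/eqP -> /eqP h]; move: m0; rewrite -h.
  - by move/eqP ->; apply: bndN.
  - by move/eqP ->; apply: bndS.
  - by move/eqP ->; apply: bndW.
  - by move/eqP ->; apply: bndE.
have eE : \sum_(0 <= i < n) \sum_(0 <= j < n) uE i j = \sum_(0 <= i < n) \sum_(0 <= j < n) uW i j.
  by apply: eq_big_nat => i /andP[_ hi]; apply: rowshift.
have eS : \sum_(0 <= i < n) \sum_(0 <= j < n) uS i j = \sum_(0 <= i < n) \sum_(0 <= j < n) uN i j.
  rewrite exchange_big_nat [RHS]exchange_big_nat.
  by apply: eq_big_nat => j /andP[_ hj]; apply: colshift.
have eH : \sum_(0 <= i < n) \sum_(0 <= j < n) hc i j = \sum_(0 <= i < n) \sum_(0 <= j < n) uW i j.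
  apply: eq_big_nat => i /andP[_ hi]; rewrite /hc; case: (i == m) => //.
  exact: rowshift.
have eV : \sum_(0 <= i < n) \sum_(0 <= j < n) vc i j = \sum_(0 <= i < n) \sum_(0 <= j < n) uN i j.
  rewrite exchange_big_nat [RHS]exchange_big_nat.
  apply: eq_big_nat => j /andP[_ hj]; rewrite /vc; case: (j == m) => //.
  exact: colshift.
have key : \sum_(0 <= i < n) \sum_(0 <= j < n) (sc (tl i j) + ell (tl i j)) =
           \sum_(0 <= i < n) \sum_(0 <= j < n) (hc i j + vc i j).
  apply/eqP; rewrite -(eqn_pmul2l (isT : 0 < 2)); apply/eqP.
  rewrite !big_distrr /=.
  under eq_bigr => i _ do rewrite big_distrr /=.
  under [RHS]eq_bigr => i _ do rewrite big_distrr /=.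
  under eq_bigr => i _ do under eq_bigr => j _ do rewrite tile_id2' -/(uN i j) -/(uE i j) -/(uS i j) -/(uW i j).
  under [RHS]eq_bigr => i _ do under eq_bigr => j _ do rewrite mulnDr !mul2n -!addnn.
  rewrite !dsplit eE eS eH eV; lia.
have hle : \sum_(0 <= i < n) \sum_(0 <= j < n) (hc i j + vc i j) <=
   \sum_(0 <= i < n) \sum_(0 <= j < n) (ell (tl i j) + bfun (i == 0) (i == m) (j == 0) (j == m)).
  rewrite big_nat_cond [X in _ <= X]big_nat_cond; apply: leq_sum => i /andP[/andP[_ hi] _].
  rewrite big_nat_cond [X in _ <= X]big_nat_cond; apply: leq_sum => j /andP[/andP[_ hj] _].
  exact: loc.
move: hle; rewrite -key !dsplit [X in _ <= X]addnC leq_add2r //.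
Qed.
End S.
Lemma writhe_bound n (M : mosaic n) x0 :
  (- writhe M x0 <= (\sum_(i < n) \sum_(j < n) (is_crossing (M i j) : nat))%:Z)%R.
Proof.
rewrite /writhe -sumrN (big_morph Posz PoszD (erefl _)).
apply: ler_sum => i _; rewrite -sumrN (big_morph Posz PoszD (erefl _)).
apply: ler_sum => j _; case: (is_crossing _) => //=.
by rewrite /crossing_sign; case: ifP.
Qed.

Local Open Scope ring_scope.
Lemma final (R : realType) (w : int) (X C m : nat) :
  (- w <= X%:Z)%R -> (2 * X + C + 2 * m <= 2 * m ^ 2 + 2)%N -> (0 < m)%N ->
  (Num.ceil (Num.sqrt (- ((w%:~R : R) - C%:R / 2) - 3 / 4) + 3 / 2) <= (m.+1)%:Z)%R.
Proof.
move=> hw hn m0.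
rewrite ceil_le_int.
have hw' : (- (w%:~R : R) <= X%:R)%R.
  by rewrite -mulrNz -[X%:R]/((X%:Z)%:~R) ler_int.
have hn' : ((2 * X + C + 2 * m)%N%:R <= (2 * m ^ 2 + 2)%N%:R :> R)%R by rewrite ler_nat.
rewrite !natrD !natrM in hn'.
have m1 : (1 <= m%:R :> R)%R by rewrite ler1n.
set y := ((m.+1)%:~R - 3 / 2 : R)%R.
have y0 : (0 <= y)%R.
  rewrite /y -[(m.+1)%:~R]/(m.+1%:R : R) -addn1 natrD.
  lra.
suff h : (Num.sqrt (- ((w%:~R : R) - C%:R / 2) - 3 / 4) <= y)%R by rewrite /y in h; lra.
rewrite -(ger0_norm y0) -sqrtr_sqr; apply: ler_wsqrtr.
rewrite /y -[(m.+1)%:~R]/(m.+1%:R : R) -[m.+1]addn1 natrD.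
set mm := (m%:R : R) in hn' m1 *.
set x := (X%:R : R) in hn' hw' *.
set c := (C%:R : R) in hn' hw' *.
rewrite expr2. lra.
Qed.

Lemma allfree t : ~~ uses t sN -> ~~ uses t sE -> ~~ uses t sS -> ~~ uses t sW -> t = T0.
Proof. by case: t. Qed.

Lemma conv m (M : mosaic m.+1) (F : tile -> nat) :
  \sum_(0 <= i < m.+1) \sum_(0 <= j < m.+1) F (@tl m M i j) = \sum_(i < m.+1) \sum_(j < m.+1) F (M i j).
Proof.
rewrite big_mkord; apply: eq_bigr => i _; rewrite big_mkord; apply: eq_bigr => j _.
by rewrite /tl !inord_val.
Qed.

Lemma dsplit_ord k (F G : 'I_k -> 'I_k -> nat) :
  (\sum_(i < k) \sum_(j < k) (F i j + G i j) =
  \sum_(i < k) \sum_(j < k) F i j + \sum_(i < k) \sum_(j < k) G i j)%N.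
Proof. by rewrite -big_split /=; apply: eq_bigr => i _; rewrite big_split. Qed.

Theorem theorem2p4 (R : realType) (n : nat) (M : mosaic n) (x0 : state n) :
  suitably_connected M ->
  knot_mosaic M x0 ->
  (tb R M x0 < 0)%R ->
  (Num.ceil (Num.sqrt (- tb R M x0 - 3 / 4) + 3 / 2) <= n%:Z)%R.
Proof.
case: n M x0 => [|[|k]] M x0 SC _ htb.
- by move: htb; rewrite /tb /writhe /cusps !big_ord0 mul0r subr0 ltxx.
- have e0 : inord 0 = ord0 :> 'I_1 by apply: val_inj; rewrite /= inordK.
  have t0 : M ord0 ord0 = T0.
    apply: allfree; rewrite -e0.
    + exact: (@bndN 0 M SC 0).
    + exact: (@bndE 0 M SC 0).
    + exact: (@bndS 0 M SC 0).
    + exact: (@bndW 0 M SC 0).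
  by move: htb; rewrite /tb /writhe /cusps !big_ord1 t0 /= mul0r subr0 ltxx.
- have hb := @main_bound k.+1 M SC isT.
  have hs := bsum k.
  rewrite (@conv k.+1 M sc) in hb.
  rewrite /sc dsplit_ord dsplit_ord in hb.
  apply: (@final R (writhe M x0) (\sum_(i < k.+2) \sum_(j < k.+2) (is_crossing (M i j) : nat)) (cusps M) k.+1).
  + exact: writhe_bound.
  + rewrite /cusps; lia.
  + by [].
Qed.
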